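(* Let $\alpha$ be a positive quadratic irrational and $A_1,A_2\in GL(2,\mathbb Z)$. If $\pi(A_1)$ and $\pi(A_2)$ restrict to isometric automorphisms of $\mathcal A_\alpha$, then $A_1A_2=A_2A_1$.
   Context: For $f\in C(\mathbb T^2)$ (with $\mathbb T$ the unit circle), the Fourier transform is $\hat f(m,n)=\int_{\mathbb T^2} f(e^{is},e^{it})e^{-i(ms+nt)}\,d\mu$, $\mu$ normalized Lebesgue measure. For a positive irrational $\alpha$, $\mathcal A_\alpha=\{f\in C(\mathbb T^2): \hat f(m,n)=0 \text{ whenever } m+\alpha n<0\}$, a uniform algebra with the sup norm on $\mathbb T^2$. For $A=\begin{bmatrix} a&b\\ c&d\end{bmatrix}\in GL(2,\mathbb Z)$, $\pi(A):C(\mathbb T^2)\to C(\mathbb T^2)$ is $\pi(A)(f)=f\circ\varphi$ with $\varphi(z,w)=(z^aw^b,z^cw^d)$. *)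

(* Defs.v *)
From Stdlib Require Import Reals ZArith ClassicalEpsilon.
Open Scope R_scope.

(* Riemann integral of f over [a,b] (value of RiemannInt for any integrability
   proof; arbitrary if f is not Riemann integrable -- only used on continuous
   integrands). *)
Definition RInt (f : R -> R) (a b : R) : R :=
  epsilon (inhabits 0%R)
    (fun r => exists pr : Riemann_integrable f a b, RiemannInt pr = r).

(* A complex-valued function on T^2, in the parametrisation
   (s,t) |-> f(e^{is}, e^{it}); the value is (real part, imaginary part). *)
Definition CFun := R -> R -> (R * R).

Definition cont2 (g : CFun) : Prop :=
  forall s t eps, 0 < eps -> exists delta, 0 < delta /\
    forall s' t', Rabs (s' - s) < delta -> Rabs (t' - t) < delta ->
      Rabs (fst (g s' t') - fst (g s t)) < eps /\
      Rabs (snd (g s' t') - snd (g s t)) < eps.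

(* 2pi-periodic in each variable, i.e. g comes from a function on T^2 *)
Definition periodic2 (g : CFun) : Prop :=
  forall s t, g (s + 2 * PI) t = g s t /\ g s (t + 2 * PI) = g s t.

Definition isCT2 (g : CFun) : Prop := cont2 g /\ periodic2 g.

(* Fourier coefficient hat f(m,n) = int f(e^{is},e^{it}) e^{-i(ms+nt)} dmu,
   with mu normalised Lebesgue measure: real and imaginary parts. *)
Definition fourier_re (g : CFun) (m n : Z) : R :=
  / (4 * PI ^ 2) *
  RInt (fun s => RInt (fun t =>
      fst (g s t) * cos (IZR m * s + IZR n * t)
    + snd (g s t) * sin (IZR m * s + IZR n * t)) 0 (2 * PI)) 0 (2 * PI).

Definition fourier_im (g : CFun) (m n : Z) : R :=
  / (4 * PI ^ 2) *
  RInt (fun s => RInt (fun t =>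
      snd (g s t) * cos (IZR m * s + IZR n * t)
    - fst (g s t) * sin (IZR m * s + IZR n * t)) 0 (2 * PI)) 0 (2 * PI).

Definition inA (alpha : R) (g : CFun) : Prop :=
  isCT2 g /\
  forall m n : Z, IZR m + alpha * IZR n < 0 ->
    fourier_re g m n = 0 /\ fourier_im g m n = 0.

Definition pos_quad_irrational (alpha : R) : Prop :=
  0 < alpha /\
  (forall p q : Z, q <> 0%Z -> alpha <> IZR p / IZR q) /\
  (exists a b c : Z, a <> 0%Z /\
     IZR a * alpha ^ 2 + IZR b * alpha + IZR c = 0).

Record mat2 := Mat2 { ma : Z; mb : Z; mc : Z; md : Z }.

Definition mat2_mul (A B : mat2) : mat2 :=
  Mat2 (ma A * ma B + mb A * mc B)%Z (ma A * mb B + mb A * md B)%Z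
       (mc A * ma B + md A * mc B)%Z (mc A * mb B + md A * md B)%Z.

Definition inGL2Z (A : mat2) : Prop :=
  (ma A * md A - mb A * mc A = 1)%Z \/ (ma A * md A - mb A * mc A = -1)%Z.

(* pi(A) f = f o phi, phi(z,w) = (z^a w^b, z^c w^d); in the parametrisation
   phi(e^{is},e^{it}) = (e^{i(as+bt)}, e^{i(cs+dt)}). *)
Definition piA (A : mat2) (g : CFun) : CFun :=
  fun s t => g (IZR (ma A) * s + IZR (mb A) * t) (IZR (mc A) * s + IZR (md A) * t).

(* pi(A) restricts to an (isometric) automorphism of A_alpha:
   it maps A_alpha into A_alpha and onto A_alpha.  (Injectivity, linearity,
   multiplicativity and sup-norm isometry hold automatically for pi(A).) *)
Definition restricts_to_aut (alpha : R) (A : mat2) : Prop :=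
  (forall g, inA alpha g -> inA alpha (piA A g)) /\
  (forall h, inA alpha h -> exists g, inA alpha g /\
       forall s t, piA A g s t = h s t).

(* Main.v *)
Require Import Defs.
From Stdlib Require Import Reals ZArith ClassicalEpsilon Lra Lia FunctionalExtensionality.
From Coquelicot Require Import Coquelicot.
Open Scope R_scope.

Lemma defs_RInt_eq f a b v : is_RInt f a b v -> Defs.RInt f a b = v.
Proof.
  intro H.
  assert (Hex : exists pr : Riemann_integrable f a b, RiemannInt pr = v).
  { assert (pr := ex_RInt_Reals_0 f a b (ex_intro _ v H)). exists pr.
    rewrite <- RInt_Reals. now apply is_RInt_unique. }
  unfold Defs.RInt.
  destruct (epsilon_spec (inhabits 0) (fun r : R => exists pr : Riemann_integrable f a b, RiemannInt pr = r) (ex_intro _ v Hex)) as [pr' Hpr'].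
  rewrite <- Hpr'. destruct Hex as [pr Hpr]. rewrite <- Hpr. apply RiemannInt_P5.
Qed.

Lemma cos_zperiod x (k : Z) : cos (x + IZR k * (2 * PI)) = cos x.
Proof.
  destruct (Z_le_gt_dec 0 k) as [Hk|Hk].
  - rewrite <- (Z2Nat.id k Hk), <- INR_IZR_INZ.
    replace (x + INR (Z.to_nat k) * (2 * PI)) with (x + 2 * INR (Z.to_nat k) * PI) by ring.
    apply cos_period.
  - set (y := x + IZR k * (2 * PI)).
    assert (Hk' : (0 <= - k)%Z) by lia.
    replace x with (y + 2 * INR (Z.to_nat (- k)) * PI).
    + symmetry. apply cos_period.
    + rewrite INR_IZR_INZ, Z2Nat.id by exact Hk'. unfold y. rewrite opp_IZR. ring.
Qed.

Lemma sin_zperiod x (k : Z) : sin (x + IZR k * (2 * PI)) = sin x.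
Proof.
  destruct (Z_le_gt_dec 0 k) as [Hk|Hk].
  - rewrite <- (Z2Nat.id k Hk), <- INR_IZR_INZ.
    replace (x + INR (Z.to_nat k) * (2 * PI)) with (x + 2 * INR (Z.to_nat k) * PI) by ring.
    apply sin_period.
  - set (y := x + IZR k * (2 * PI)).
    assert (Hk' : (0 <= - k)%Z) by lia.
    replace x with (y + 2 * INR (Z.to_nat (- k)) * PI).
    + symmetry. apply sin_period.
    + rewrite INR_IZR_INZ, Z2Nat.id by exact Hk'. unfold y. rewrite opp_IZR. ring.
Qed.

Definition indZ (l : Z) : R := if Z.eq_dec l 0 then 2 * PI else 0.

Lemma int_cos c (l : Z) :
  is_RInt (fun t => cos (c + IZR l * t)) 0 (2 * PI) (indZ l * cos c).
Proof.
  unfold indZ; destruct (Z.eq_dec l 0) as [->|Hl].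
  - replace (2 * PI * cos c) with (scal (2*PI - 0) (cos c))
      by (unfold scal; simpl; unfold mult; simpl; ring).
    eapply is_RInt_ext; [| apply (is_RInt_const 0 (2*PI) (cos c))].
    intros x _. simpl. f_equal. ring.
  - assert (Hl' : IZR l <> 0) by (apply not_0_IZR; exact Hl).
    replace (0 * cos c) with (minus (sin (c + IZR l * (2*PI)) / IZR l) (sin (c + IZR l * 0) / IZR l)).
    + apply (is_RInt_derive (fun t => sin (c + IZR l * t) / IZR l)).
      * intros x _. auto_derive; [exact I|]. field. exact Hl'.
      * intros x _. apply continuity_pt_filterlim.
        apply (continuity_pt_comp (fun t => c + IZR l * t) cos).
        -- reg.
        -- apply continuity_cos.
    + rewrite sin_zperiod. unfold minus, plus, opp; simpl.
      replace (c + IZR l * 0) with c by ring. ring.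
Qed.

Lemma int_sin c (l : Z) :
  is_RInt (fun t => sin (c + IZR l * t)) 0 (2 * PI) (indZ l * sin c).
Proof.
  unfold indZ; destruct (Z.eq_dec l 0) as [->|Hl].
  - replace (2 * PI * sin c) with (scal (2*PI - 0) (sin c))
      by (unfold scal; simpl; unfold mult; simpl; ring).
    eapply is_RInt_ext; [| apply (is_RInt_const 0 (2*PI) (sin c))].
    intros x _. simpl. f_equal. ring.
  - assert (Hl' : IZR l <> 0) by (apply not_0_IZR; exact Hl).
    replace (0 * sin c) with (minus (- cos (c + IZR l * (2*PI)) / IZR l) (- cos (c + IZR l * 0) / IZR l)).
    + apply (is_RInt_derive (fun t => - cos (c + IZR l * t) / IZR l)).
      * intros x _. auto_derive; [exact I|]. field. exact Hl'.
      * intros x _. apply continuity_pt_filterlim.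
        apply (continuity_pt_comp (fun t => c + IZR l * t) sin).
        -- reg.
        -- apply continuity_sin.
    + rewrite cos_zperiod. unfold minus, plus, opp; simpl.
      replace (c + IZR l * 0) with c by ring. ring.
Qed.

Lemma is_RInt_val (f : R -> R) a b v w : is_RInt f a b v -> v = w -> is_RInt f a b w.
Proof. intros H ->; exact H. Qed.

Lemma dbl_cos (k l : Z) :
  Defs.RInt (fun s => Defs.RInt (fun t => cos (IZR k * s + IZR l * t)) 0 (2*PI)) 0 (2*PI)
  = indZ l * indZ k.
Proof.
  replace (fun s => Defs.RInt (fun t => cos (IZR k * s + IZR l * t)) 0 (2*PI))
    with (fun s => indZ l * cos (0 + IZR k * s)).
  2:{ apply functional_extensionality; intro s. symmetry.
      rewrite Rplus_0_l. apply defs_RInt_eq. apply int_cos. }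
  apply defs_RInt_eq. 
  assert (H := is_RInt_scal (fun s => cos (0 + IZR k * s)) 0 (2*PI) (indZ l) _ (int_cos 0 k)).
  
  rewrite cos_0, Rmult_1_r in H. exact H.
Qed.

Lemma dbl_sin (k l : Z) :
  Defs.RInt (fun s => Defs.RInt (fun t => sin (IZR k * s + IZR l * t)) 0 (2*PI)) 0 (2*PI)
  = 0.
Proof.
  replace (fun s => Defs.RInt (fun t => sin (IZR k * s + IZR l * t)) 0 (2*PI))
    with (fun s => indZ l * sin (0 + IZR k * s)).
  2:{ apply functional_extensionality; intro s. symmetry.
      rewrite Rplus_0_l. apply defs_RInt_eq. apply int_sin. }
  apply defs_RInt_eq.
  assert (H := is_RInt_scal (fun s => sin (0 + IZR k * s)) 0 (2*PI) (indZ l) _ (int_sin 0 k)).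
  rewrite sin_0, Rmult_0_r in H.
  eapply is_RInt_val; [exact H|]. unfold scal; simpl; unfold mult; simpl; ring.
Qed.
Definition mono (p q : Z) : CFun :=
  fun s t => (cos (IZR p * s + IZR q * t), sin (IZR p * s + IZR q * t)).

Lemma fourier_mono g p q m n :
  (forall s t, g s t = mono p q s t) ->
  fourier_re g m n = (if Z.eq_dec p m then if Z.eq_dec q n then 1 else 0 else 0)
  /\ fourier_im g m n = 0.
Proof.
  intro Hg.
  assert (E : g = mono p q).
  { apply functional_extensionality; intro s; apply functional_extensionality; intro t; apply Hg. }
  subst g. split.
  - unfold fourier_re.
    replace (fun s => Defs.RInt (fun t => fst (mono p q s t) * cos (IZR m * s + IZR n * t)
        + snd (mono p q s t) * sin (IZR m * s + IZR n * t)) 0 (2 * PI))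
      with (fun s => Defs.RInt (fun t => cos (IZR (p - m) * s + IZR (q - n) * t)) 0 (2 * PI)).
    2:{ apply functional_extensionality; intro s. f_equal.
        apply functional_extensionality; intro t. unfold mono; simpl.
        rewrite <- cos_minus. f_equal. rewrite !minus_IZR. ring. }
    rewrite dbl_cos. unfold indZ.
    assert (PI <> 0) by (generalize PI_RGT_0; lra).
    destruct (Z.eq_dec p m); destruct (Z.eq_dec (p - m) 0); try lia;
    destruct (Z.eq_dec q n); destruct (Z.eq_dec (q - n) 0); try lia;
    try field; try ring; auto.
  - unfold fourier_im.
    replace (fun s => Defs.RInt (fun t => snd (mono p q s t) * cos (IZR m * s + IZR n * t)
        - fst (mono p q s t) * sin (IZR m * s + IZR n * t)) 0 (2 * PI))
      with (fun s => Defs.RInt (fun t => sin (IZR (p - m) * s + IZR (q - n) * t)) 0 (2 * PI)).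
    2:{ apply functional_extensionality; intro s. f_equal.
        apply functional_extensionality; intro t. unfold mono; simpl.
        rewrite <- sin_minus. f_equal. rewrite !minus_IZR. ring. }
    rewrite dbl_sin. ring.
Qed.

Lemma cos_lip x y : Rabs (cos x - cos y) <= Rabs (x - y).
Proof.
  destruct (MVT_abs cos (fun c => - sin c) y x) as [c [Hc _]].
  { intros c _. apply derivable_pt_lim_cos. }
  rewrite Hc, Rabs_Ropp.
  assert (Rabs (sin c) <= 1) by (apply Rabs_le; apply SIN_bound).
  assert (0 <= Rabs (x - y)) by apply Rabs_pos.
  nra.
Qed.

Lemma sin_lip x y : Rabs (sin x - sin y) <= Rabs (x - y).
Proof.
  destruct (MVT_abs sin cos y x) as [c [Hc _]].
  { intros c _. apply derivable_pt_lim_sin. }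
  rewrite Hc.
  assert (Rabs (cos c) <= 1) by (apply Rabs_le; apply COS_bound).
  assert (0 <= Rabs (x - y)) by apply Rabs_pos.
  nra.
Qed.

Lemma mono_CT2 p q : isCT2 (mono p q).
Proof.
  split.
  - intros s t eps Heps.
    set (K := Rabs (IZR p) + Rabs (IZR q) + 1).
    assert (HK : 0 < K) by (unfold K; generalize (Rabs_pos (IZR p)) (Rabs_pos (IZR q)); lra).
    exists (eps / K). split; [apply Rdiv_lt_0_compat; lra|].
    intros s' t' Hs Ht.
    assert (Harg : Rabs ((IZR p * s' + IZR q * t') - (IZR p * s + IZR q * t)) < eps).
    { replace ((IZR p * s' + IZR q * t') - (IZR p * s + IZR q * t))
        with (IZR p * (s' - s) + IZR q * (t' - t)) by ring.
      eapply Rle_lt_trans; [apply Rabs_triang|].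
      rewrite !Rabs_mult.
      assert (e1 : Rabs (IZR p) * Rabs (s' - s) <= Rabs (IZR p) * (eps / K))
        by (apply Rmult_le_compat_l; [apply Rabs_pos|lra]).
      assert (e2 : Rabs (IZR q) * Rabs (t' - t) <= Rabs (IZR q) * (eps / K))
        by (apply Rmult_le_compat_l; [apply Rabs_pos|lra]).
      assert (e3 : (Rabs (IZR p) + Rabs (IZR q)) * (eps / K) < K * (eps / K)).
      { apply Rmult_lt_compat_r; [apply Rdiv_lt_0_compat; lra| unfold K; lra]. }
      assert (e4 : K * (eps / K) = eps) by (field; lra).
      lra. }
    unfold mono; simpl. split.
    + eapply Rle_lt_trans; [apply cos_lip|exact Harg].
    + eapply Rle_lt_trans; [apply sin_lip|exact Harg].
  - intros s t. unfold mono. split; f_equal.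
    + replace (IZR p * (s + 2 * PI) + IZR q * t) with (IZR p * s + IZR q * t + IZR p * (2 * PI)) by ring.
      apply cos_zperiod.
    + replace (IZR p * (s + 2 * PI) + IZR q * t) with (IZR p * s + IZR q * t + IZR p * (2 * PI)) by ring.
      apply sin_zperiod.
    + replace (IZR p * s + IZR q * (t + 2 * PI)) with (IZR p * s + IZR q * t + IZR q * (2 * PI)) by ring.
      apply cos_zperiod.
    + replace (IZR p * s + IZR q * (t + 2 * PI)) with (IZR p * s + IZR q * t + IZR q * (2 * PI)) by ring.
      apply sin_zperiod.
Qed.

Lemma mono_inA alpha p q : 0 <= IZR p + alpha * IZR q -> inA alpha (mono p q).
Proof.
  intro H. split; [apply mono_CT2|].
  intros m n Hmn.
  destruct (fourier_mono (mono p q) p q m n (fun s t => eq_refl)) as [E1 E2].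
  rewrite E1, E2. split; [|reflexivity].
  destruct (Z.eq_dec p m) as [<-|]; [|reflexivity].
  destruct (Z.eq_dec q n) as [<-|]; [lra|reflexivity].
Qed.

Lemma key alpha A : restricts_to_aut alpha A ->
  forall p q : Z, 0 <= IZR p + alpha * IZR q ->
  0 <= IZR p * (IZR (ma A) + alpha * IZR (mb A)) + IZR q * (IZR (mc A) + alpha * IZR (md A)).
Proof.
  intros [Hf _] p q Hpq.
  destruct (Rle_or_lt 0 (IZR p * (IZR (ma A) + alpha * IZR (mb A)) + IZR q * (IZR (mc A) + alpha * IZR (md A)))) as [|Hlt]; [assumption|].
  exfalso.
  set (m := (p * ma A + q * mc A)%Z). set (n := (p * mb A + q * md A)%Z).
  destruct (Hf _ (mono_inA alpha p q Hpq)) as [_ Hc].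
  assert (Hmn : IZR m + alpha * IZR n < 0).
  { unfold m, n. rewrite !plus_IZR, !mult_IZR. nra. }
  destruct (Hc m n Hmn) as [Hre _].
  assert (Hpi : forall s t, piA A (mono p q) s t = mono m n s t).
  { intros s t. unfold piA, mono, m, n. rewrite !plus_IZR, !mult_IZR.
    f_equal; f_equal; ring. }
  destruct (fourier_mono _ m n m n Hpi) as [E _].
  rewrite E in Hre.
  destruct (Z.eq_dec m m); [|congruence]. destruct (Z.eq_dec n n); [|congruence]. lra.
Qed.

Lemma eig alpha A : restricts_to_aut alpha A ->
  IZR (mc A) + alpha * IZR (md A) = alpha * (IZR (ma A) + alpha * IZR (mb A)).
Proof.
  intro HA. pose proof (key alpha A HA) as K.
  set (u := IZR (ma A) + alpha * IZR (mb A)) in *.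
  set (v := IZR (mc A) + alpha * IZR (md A)) in *.
  destruct (Req_dec (v - alpha * u) 0) as [H|Hw]; [lra|exfalso].
  set (w := v - alpha * u) in *.
  assert (Hwp : 0 < Rabs w) by (apply Rabs_pos_lt; exact Hw).
  set (N := up (Rabs u / Rabs w)).
  destruct (archimed (Rabs u / Rabs w)) as [HN _]. fold N in HN.
  assert (HwN : Rabs u < Rabs w * IZR N).
  { apply (Rmult_lt_compat_l (Rabs w)) in HN; [|exact Hwp].
    replace (Rabs w * (Rabs u / Rabs w)) with (Rabs u) in HN by (field; lra). lra. }
  set (q := if Rlt_dec 0 w then (- N)%Z else N).
  assert (Hwq : w * IZR q = - (Rabs w * IZR N)).
  { unfold q; destruct (Rlt_dec 0 w).
    - rewrite opp_IZR, Rabs_right by lra. ring.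
    - rewrite Rabs_left by lra. ring. }
  set (p := up (- (alpha * IZR q))).
  destruct (archimed (- (alpha * IZR q))) as [Hp1 Hp2]. fold p in Hp1, Hp2.
  assert (HL : 0 <= IZR p + alpha * IZR q) by lra.
  specialize (K p q HL).
  assert (E : IZR p * u + IZR q * v = u * (IZR p + alpha * IZR q) + w * IZR q)
    by (unfold w; ring).
  rewrite E, Hwq in K.
  set (L := IZR p + alpha * IZR q) in *.
  assert (HL1 : L <= 1) by (unfold L; lra).
  assert (u * L <= Rabs u).
  { destruct (Rle_or_lt 0 u).
    - rewrite Rabs_right by lra. nra.
    - rewrite Rabs_left by lra. nra. }
  lra.
Qed.

Lemma irr_lin alpha (P Q : Z) : pos_quad_irrational alpha ->
  IZR P * alpha + IZR Q = 0 -> P = 0%Z /\ Q = 0%Z.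
Proof.
  intros [_ [Hirr _]] H.
  destruct (Z.eq_dec P 0) as [->|HP].
  - split; [reflexivity|]. apply eq_IZR. lra.
  - exfalso. apply (Hirr (- Q)%Z P HP).
    rewrite opp_IZR. apply not_0_IZR in HP. field_simplify_eq; [lra|exact HP].
Qed.

Theorem mainTheorem10 (alpha : R) (A1 A2 : mat2) :
  pos_quad_irrational alpha ->
  inGL2Z A1 -> inGL2Z A2 ->
  restricts_to_aut alpha A1 -> restricts_to_aut alpha A2 ->
  mat2_mul A1 A2 = mat2_mul A2 A1.
Proof.
  intros Hq _ _ H1 H2.
  pose proof (eig alpha A1 H1) as E1. pose proof (eig alpha A2 H2) as E2.
  assert (Ha : 0 < alpha) by apply Hq.
  destruct A1 as [a1 b1 c1 d1], A2 as [a2 b2 c2 d2]; simpl in *.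
  destruct (irr_lin alpha (b2*(a1-d1) - b1*(a2-d2)) (b1*c2 - b2*c1) Hq) as [Z1 Z2].
  { rewrite !minus_IZR, !mult_IZR, !minus_IZR.
    assert (F1 : IZR b2 * (IZR c1 + alpha * IZR d1 - alpha * (IZR a1 + alpha * IZR b1)) = 0) by (rewrite E1; ring).
    assert (F2 : IZR b1 * (IZR c2 + alpha * IZR d2 - alpha * (IZR a2 + alpha * IZR b2)) = 0) by (rewrite E2; ring).
    lra. }
  destruct (irr_lin alpha (c2*b1 - c1*b2) (c2*(a1-d1) - c1*(a2-d2)) Hq) as [Z3 Z4].
  { rewrite !minus_IZR, !mult_IZR, !minus_IZR.
    assert (F1 : IZR c2 * (IZR c1 + alpha * IZR d1 - alpha * (IZR a1 + alpha * IZR b1)) = 0) by (rewrite E1; ring).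
    assert (F2 : IZR c1 * (IZR c2 + alpha * IZR d2 - alpha * (IZR a2 + alpha * IZR b2)) = 0) by (rewrite E2; ring).
    apply (Rmult_eq_reg_l alpha); [|lra]. lra. }
  unfold mat2_mul; simpl. f_equal; lia.
Qed.
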